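(* Let $-1\le a<1$ and $\mathfrak g=\mathfrak r_{3,a}$ (basis $\{e_1,e_2,e_3\}$, nonzero brackets $[e_1,e_2]=e_2$, $[e_1,e_3]=ae_3$), and let $\langle\cdot,\cdot\rangle_0$ be the inner product for which $\{e_1,e_2,e_3\}$ is orthonormal. An inner product $\langle\cdot,\cdot\rangle$ on $\mathfrak g$ is a solvsoliton if and only if $[\langle\cdot,\cdot\rangle]=[\langle\cdot,\cdot\rangle_0]$.
   Context: An inner product on a solvable Lie algebra $\mathfrak g$ is a solvsoliton if its Ricci operator satisfies $\mathrm{Ric}=cI+D$ for some $c\in\mathbb R$ and $D\in\mathrm{Der}(\mathfrak g)$ (Ricci operator of the metric Lie algebra defined via the Levi-Civita connection $2\langle\nabla_XY,Z\rangle=\langle[Z,X],Y\rangle+\langle X,[Z,Y]\rangle+\langle[X,Y],Z\rangle$, $R(X,Y)=[\nabla_X,\nabla_Y]-\nabla_{[X,Y]}$, $\mathrm{Ric}(X)=\sum_iR(X,e_i)e_i$ for an orthonormal basis). Two inner products are isometric up to scaling if $\langle\cdot,\cdot\rangle_1=k\langle f\cdot,f\cdot\rangle_2$ for some $k>0$ and Lie algebra automorphism $f$ of $\mathfrak g$; $[\langle\cdot,\cdot\rangle]$ denotes the equivalence class. *)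

(* Defs.v *)
(* Vectors of g = r_{3,a} are row vectors 'rV[R]_3 in the
   basis (e_1,e_2,e_3) = (delta 0, delta 1, delta 2). *)
From HB Require Import structures.
From mathcomp Require Import all_boot all_order all_algebra.
Set Implicit Arguments. Unset Strict Implicit. Unset Printing Implicit Defensive.
Import Order.TTheory GRing.Theory Num.Theory.
Local Open Scope ring_scope.

Section R3a.
Variable R : realFieldType.

Definition vec := 'rV[R]_3.

Definition coord3 (u : vec) (i : nat) : R := u ord0 (inord i).

Definition bvec (i : 'I_3) : vec := delta_mx ord0 i.

(* Lie bracket of r_{3,a}: [e1,e2] = e2, [e1,e3] = a e3, others zero *)
Definition br (a : R) (u v : vec) : vec :=
  \row_(k < 3)
    (if val k == 0%N then 0
     else if val k == 1%N then coord3 u 0 * coord3 v 1 - coord3 u 1 * coord3 v 0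
     else a * (coord3 u 0 * coord3 v 2 - coord3 u 2 * coord3 v 0)).

Definition ip (G : 'M[R]_3) (u v : vec) : R := (u *m G *m v^T) ord0 ord0.

Definition is_inner_product (G : 'M[R]_3) : Prop :=
  G^T = G /\ forall v : vec, v != 0 -> 0 < ip G v v.

(* Levi-Civita connection: nabla_X Y is the unique Z0 with
   2<Z0,Z> = <[Z,X],Y> + <X,[Z,Y]> + <[X,Y],Z> for all Z;
   since <Z0, e_k> = (Z0 *m G)_k, Z0 = (1/2) w *m G^{-1}. *)
Definition nabla (a : R) (G : 'M[R]_3) (X Y : vec) : vec :=
  (2%:R)^-1 *: ((\row_(k < 3)
     (ip G (br a (bvec k) X) Y + ip G X (br a (bvec k) Y)
      + ip G (br a X Y) (bvec k))) *m invmx G).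

Definition curv (a : R) (G : 'M[R]_3) (X Y Z : vec) : vec :=
  nabla a G X (nabla a G Y Z) - nabla a G Y (nabla a G X Z)
  - nabla a G (br a X Y) Z.

Definition orthonormal_basis (G : 'M[R]_3) (F : 'I_3 -> vec) : Prop :=
  forall i j : 'I_3, ip G (F i) (F j) = (i == j)%:R.

Definition ricci (a : R) (G : 'M[R]_3) (F : 'I_3 -> vec) (X : vec) : vec :=
  \sum_(i < 3) curv a G X (F i) (F i).

Definition is_derivation (a : R) (D : 'M[R]_3) : Prop :=
  forall u v : vec, br a u v *m D = br a (u *m D) v + br a u (v *m D).

Definition is_automorphism (a : R) (f : 'M[R]_3) : Prop :=
  f \in unitmx /\ forall u v : vec, br a (u *m f) (v *m f) = br a u v *m f.

Definition solvsoliton (a : R) (G : 'M[R]_3) : Prop :=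
  exists F : 'I_3 -> vec, orthonormal_basis G F /\
  exists (c : R) (D : 'M[R]_3), is_derivation a D /\
    forall X : vec, ricci a G F X = c *: X + X *m D.

Definition iso_up_to_scaling (a : R) (G1 G2 : 'M[R]_3) : Prop :=
  exists (k : R) (f : 'M[R]_3), 0 < k /\ is_automorphism a f /\
    forall u v : vec, ip G1 u v = k * ip G2 (u *m f) (v *m f).

End R3a.

(* Main.v *)
Require Import Defs.
From HB Require Import structures.
From mathcomp Require Import all_boot all_order all_algebra.
From mathcomp Require Import reals.
From mathcomp Require Import ring lra.
Import Order.TTheory GRing.Theory Num.Theory.
Local Open Scope ring_scope.
Set Implicit Arguments. Unset Strict Implicit.

Section Basics.
Variable R : realFieldType.
Implicit Types (u v w : 'rV[R]_3) (x y z : R).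

Definition i0 : 'I_3 := @Ordinal 3 0 isT.
Definition i1 : 'I_3 := @Ordinal 3 1 isT.
Definition i2 : 'I_3 := @Ordinal 3 2 isT.

Definition r3_def x y z : 'rV[R]_3 :=
  \row_(k < 3) (if val k == 0%N then x else if val k == 1%N then y else z).
Fact r3_key : unit. Proof. by []. Qed.
Definition r3 := locked_with r3_key r3_def.
Canonical r3_unlockable := [unlockable fun r3].

Lemma r3E0 x y z : r3 x y z ord0 i0 = x. Proof. by rewrite unlock mxE. Qed.
Lemma r3E1 x y z : r3 x y z ord0 i1 = y. Proof. by rewrite unlock mxE. Qed.
Lemma r3E2 x y z : r3 x y z ord0 i2 = z. Proof. by rewrite unlock mxE. Qed.

Lemma vec_eq u v : u ord0 i0 = v ord0 i0 -> u ord0 i1 = v ord0 i1 ->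
  u ord0 i2 = v ord0 i2 -> u = v.
Proof.
move=> h0 h1 h2; apply/rowP => k.
case: k => [[|[|[|k]]] Hk] //.
- by rewrite (_ : Ordinal Hk = i0) //; apply: val_inj.
- by rewrite (_ : Ordinal Hk = i1) //; apply: val_inj.
- by rewrite (_ : Ordinal Hk = i2) //; apply: val_inj.
Qed.

Lemma sum3 (V : nmodType) (F : 'I_3 -> V) : \sum_(i < 3) F i = F i0 + F i1 + F i2.
Proof.
rewrite !big_ord_recr big_ord0 /= add0r.
by congr (F _ + F _ + F _); apply: val_inj.
Qed.

Lemma coord3E0 u : coord3 u 0 = u ord0 i0.
Proof. by rewrite /coord3; congr (u _ _); apply: val_inj; rewrite /= inordK. Qed.
Lemma coord3E1 u : coord3 u 1 = u ord0 i1.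
Proof. by rewrite /coord3; congr (u _ _); apply: val_inj; rewrite /= inordK. Qed.
Lemma coord3E2 u : coord3 u 2 = u ord0 i2.
Proof. by rewrite /coord3; congr (u _ _); apply: val_inj; rewrite /= inordK. Qed.

Lemma brE0 a u v : br a u v ord0 i0 = 0. Proof. by rewrite mxE. Qed.
Lemma brE1 a u v : br a u v ord0 i1 =
  u ord0 i0 * v ord0 i1 - u ord0 i1 * v ord0 i0.
Proof. by rewrite mxE /= !coord3E0 !coord3E1. Qed.
Lemma brE2 a u v : br a u v ord0 i2 =
  a * (u ord0 i0 * v ord0 i2 - u ord0 i2 * v ord0 i0).
Proof. by rewrite mxE /= !coord3E0 !coord3E2. Qed.

Lemma bvecE (i j : 'I_3) : @bvec R i ord0 j = (i == j)%:R.
Proof. by rewrite /bvec mxE eqxx /= eq_sym. Qed.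

Lemma mulE u (M : 'M[R]_3) j : (u *m M) ord0 j =
  u ord0 i0 * M i0 j + u ord0 i1 * M i1 j + u ord0 i2 * M i2 j.
Proof. by rewrite mxE sum3. Qed.

Lemma ipE (G : 'M[R]_3) u v : ip G u v =
  \sum_(j < 3) \sum_(i < 3) u ord0 i * G i j * v ord0 j.
Proof.
rewrite /ip mxE; apply: eq_bigr => j _; rewrite mxE big_distrl /=.
by apply: eq_bigr => i _; rewrite !mxE.
Qed.

End Basics.

Section Frame.
Variable R : realFieldType.
Local Notation vec := 'rV[R]_3.
Local Notation bv := (@bvec R).
Implicit Types (u v w : vec).

Definition dot u v := u ord0 i0 * v ord0 i0 + u ord0 i1 * v ord0 i1 + u ord0 i2 * v ord0 i2.

Definition nablaI (b : vec -> vec -> vec) u v : vec :=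
  2^-1 *: \row_(k < 3) (dot (b (bv k) u) v + dot u (b (bv k) v) + dot (b u v) (bv k)).

Definition curvI b u v w : vec :=
  nablaI b u (nablaI b v w) - nablaI b v (nablaI b u w) - nablaI b (b u v) w.

Definition ricciI b u : vec := \sum_(i < 3) curvI b u (bv i) (bv i).

Definition derivI (b : vec -> vec -> vec) (D : 'M[R]_3) :=
  forall u v, b u v *m D = b (u *m D) v + b u (v *m D).

Definition phiK a G X Y (Z : vec) :=
  ip G (br a Z X) Y + ip G X (br a Z Y) + ip G (br a X Y) Z.

Lemma bv0 : bv i0 = r3 1 0 0 :> vec.
Proof. by apply: vec_eq; rewrite bvecE ?r3E0 ?r3E1 ?r3E2. Qed.
Lemma bv1 : bv i1 = r3 0 1 0 :> vec.
Proof. by apply: vec_eq; rewrite bvecE ?r3E0 ?r3E1 ?r3E2. Qed.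
Lemma bv2 : bv i2 = r3 0 0 1 :> vec.
Proof. by apply: vec_eq; rewrite bvecE ?r3E0 ?r3E1 ?r3E2. Qed.

Lemma phiK_lin a G X Y Z : phiK a G X Y Z =
  Z ord0 i0 * phiK a G X Y (bv i0) + Z ord0 i1 * phiK a G X Y (bv i1)
  + Z ord0 i2 * phiK a G X Y (bv i2).
Proof.
rewrite /phiK !ipE !sum3 !brE0 !brE1 !brE2 bv0 bv1 bv2 !r3E0 !r3E1 !r3E2.
ring.
Qed.

Lemma frame_inv G (P : 'M[R]_3) : P *m G *m P^T = 1%:M ->
  [/\ P \in unitmx, G \in unitmx & invmx G = P^T *m P].
Proof.
move=> h.
have [uP _] : P \in unitmx /\ (G *m P^T) \in unitmx by apply: mulmx1_unit; rewrite mulmxA.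
have h2 : G *m (P^T *m P) = 1%:M.
  by rewrite mulmxA; apply: mulmx1C; rewrite mulmxA.
have [uG _] := mulmx1_unit h2.
split=> //.
by rewrite -[invmx G]mulmx1 -h2 mulKmx.
Qed.

Lemma ip_frame G (P : 'M[R]_3) u v : P *m G *m P^T = 1%:M ->
  ip G (u *m P) (v *m P) = dot u v.
Proof.
move=> h; rewrite /ip trmx_mul !mulmxA -(mulmxA u) -(mulmxA u) h mulmx1.
by rewrite mxE sum3 /dot !mxE.
Qed.

Lemma nabla_frame a G (P : 'M[R]_3) (b : vec -> vec -> vec) :
  P *m G *m P^T = 1%:M -> (forall u v, br a (u *m P) (v *m P) = b u v *m P) ->
  forall u v, nabla a G (u *m P) (v *m P) = nablaI b u v *m P.
Proof.
move=> h hb u v; have [uP uG iG] := frame_inv h.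
rewrite /nabla /nablaI iG mulmxA scalemxAl; congr (_ *: _ *m P).
apply: vec_eq; rewrite mulE !mxE.
- transitivity (phiK a G (u *m P) (v *m P) (bv i0 *m P)).
    by rewrite [RHS]phiK_lin !mulE !bvecE /phiK /=; ring.
  by rewrite /phiK !hb !ip_frame.
- transitivity (phiK a G (u *m P) (v *m P) (bv i1 *m P)).
    by rewrite [RHS]phiK_lin !mulE !bvecE /phiK /=; ring.
  by rewrite /phiK !hb !ip_frame.
- transitivity (phiK a G (u *m P) (v *m P) (bv i2 *m P)).
    by rewrite [RHS]phiK_lin !mulE !bvecE /phiK /=; ring.
  by rewrite /phiK !hb !ip_frame.
Qed.


Lemma curv_frame a G (P : 'M[R]_3) (b : vec -> vec -> vec) :
  P *m G *m P^T = 1%:M -> (forall u v, br a (u *m P) (v *m P) = b u v *m P) ->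
  forall u v w, curv a G (u *m P) (v *m P) (w *m P) = curvI b u v w *m P.
Proof.
move=> h hb u v w.
by rewrite /curv /curvI hb !(nabla_frame h hb) !mulmxBl.
Qed.

Lemma ricci_frame a G (P : 'M[R]_3) (b : vec -> vec -> vec) F :
  P *m G *m P^T = 1%:M -> (forall u v, br a (u *m P) (v *m P) = b u v *m P) ->
  (forall i, F i = bv i *m P) ->
  forall u, ricci a G F (u *m P) = ricciI b u *m P.
Proof.
move=> h hb hF u; rewrite /ricci /ricciI mulmx_suml.
by apply: eq_bigr => i _; rewrite hF (curv_frame h hb).
Qed.

Lemma soliton_transfer a G (P : 'M[R]_3) (b : vec -> vec -> vec) F :
  P *m G *m P^T = 1%:M -> (forall u v, br a (u *m P) (v *m P) = b u v *m P) ->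
  (forall i, F i = bv i *m P) ->
  ((exists c D, is_derivation a D /\ forall X, ricci a G F X = c *: X + X *m D) <->
   (exists c D, derivI b D /\ forall u, ricciI b u = c *: u + u *m D)).
Proof.
move=> h hb hF; have [uP uG iG] := frame_inv h.
have hR := ricci_frame h hb hF.
split.
- move=> [c [D [hD hric]]]; exists c, (P *m D *m invmx P); split.
  + move=> u v.
    have e : forall x : vec, x *m (P *m D *m invmx P) *m P = x *m P *m D.
      by move=> x; rewrite !mulmxA mulmxKV.
    apply: (can_inj (mulmxK uP)).
    by rewrite mulmxDl -!hb !e -hb hD.
  + move=> u; apply: (can_inj (mulmxK uP)).
    rewrite -hR hric mulmxDl -scalemxAl !mulmxA mulmxKV //.
- move=> [c [D [hD hric]]]; exists c, (invmx P *m D *m P); split.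
  + move=> x y.
    have e : forall z : vec, z *m (invmx P *m D *m P) = z *m invmx P *m D *m P.
      by move=> z; rewrite !mulmxA.
    have hxy : br a x y = b (x *m invmx P) (y *m invmx P) *m P.
      by rewrite -hb !mulmxKV.
    have h1 : br a (x *m invmx P *m D *m P) y
      = b (x *m invmx P *m D) (y *m invmx P) *m P by rewrite -hb mulmxKV.
    have h2 : br a x (y *m invmx P *m D *m P)
      = b (x *m invmx P) (y *m invmx P *m D) *m P by rewrite -hb mulmxKV.
    by rewrite !e hxy h1 h2 (mulmxK uP) hD mulmxDl.
  + move=> X.
    have ex : X = X *m invmx P *m P by rewrite mulmxKV.
    rewrite {1}ex hR hric mulmxDl -scalemxAl -ex.
    by rewrite !mulmxA.
Qed.

End Frame.

Section BC.
Variable R : realFieldType.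
Local Notation vec := 'rV[R]_3.
Local Notation bv := (@bvec R).
Implicit Types (u v w : vec).
Variables (l m a : R).

Definition bc u v : vec :=
  r3 0 (l * (u ord0 i0 * v ord0 i1 - u ord0 i1 * v ord0 i0)
        + m * (u ord0 i0 * v ord0 i2 - u ord0 i2 * v ord0 i0))
       (l * a * (u ord0 i0 * v ord0 i2 - u ord0 i2 * v ord0 i0)).

Lemma vaddE u v i : (u + v) ord0 i = u ord0 i + v ord0 i. Proof. by rewrite mxE. Qed.
Lemma vsubE u v i : (u - v) ord0 i = u ord0 i - v ord0 i. Proof. by rewrite !mxE. Qed.
Lemma vscaleE c u i : (c *: u) ord0 i = c * u ord0 i. Proof. by rewrite mxE. Qed.

Lemma bcE0 u v : bc u v ord0 i0 = 0. Proof. exact: r3E0. Qed.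
Lemma bcE1 u v : bc u v ord0 i1 = l * (u ord0 i0 * v ord0 i1 - u ord0 i1 * v ord0 i0)
        + m * (u ord0 i0 * v ord0 i2 - u ord0 i2 * v ord0 i0). Proof. exact: r3E1. Qed.
Lemma bcE2 u v : bc u v ord0 i2 = l * a * (u ord0 i0 * v ord0 i2 - u ord0 i2 * v ord0 i0).
Proof. exact: r3E2. Qed.

Local Notation x0 u := (u ord0 i0).
Local Notation x1 u := (u ord0 i1).
Local Notation x2 u := (u ord0 i2).

Lemma nablaE0 u v : nablaI bc u v ord0 i0 =
  l * x1 u * x1 v + m / 2 * x1 u * x2 v + m / 2 * x2 u * x1 v + l * a * x2 u * x2 v.
Proof.
rewrite /nablaI vscaleE mxE bv0 /dot !bcE0 !bcE1 !bcE2 !r3E0 !r3E1 !r3E2.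
by field.
Qed.
Lemma nablaE1 u v : nablaI bc u v ord0 i1 =
  m / 2 * x0 u * x2 v - l * x1 u * x0 v - m / 2 * x2 u * x0 v.
Proof.
rewrite /nablaI vscaleE mxE bv1 /dot !bcE0 !bcE1 !bcE2 !r3E0 !r3E1 !r3E2.
by field.
Qed.
Lemma nablaE2 u v : nablaI bc u v ord0 i2 =
  - (m / 2) * x0 u * x1 v - m / 2 * x1 u * x0 v - l * a * x2 u * x0 v.
Proof.
rewrite /nablaI vscaleE mxE bv2 /dot !bcE0 !bcE1 !bcE2 !r3E0 !r3E1 !r3E2.
by field.
Qed.

Lemma curvE b u v w i : curvI b u v w ord0 i =
  nablaI b u (nablaI b v w) ord0 i - nablaI b v (nablaI b u w) ord0 i
  - nablaI b (b u v) w ord0 i.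
Proof. by rewrite /curvI !mxE. Qed.

Lemma ricci_bc u : ricciI bc u =
  r3 (- (l ^+ 2 * (1 + a ^+ 2) + m ^+ 2 / 2) * x0 u)
     ((m ^+ 2 / 2 - l ^+ 2 * (1 + a)) * x1 u - l * m * x2 u)
     (- (l * m) * x1 u - (m ^+ 2 / 2 + l ^+ 2 * a * (1 + a)) * x2 u).
Proof.
apply: vec_eq; rewrite /ricciI !summxE sum3 !curvE bv0 bv1 bv2
  !(nablaE0, nablaE1, nablaE2) !(bcE0, bcE1, bcE2)
  !(r3E0, r3E1, r3E2); by field.
Qed.

End BC.

Section Lin.
Variable R : realFieldType.
Local Notation vec := 'rV[R]_3.
Local Notation bv := (@bvec R).
Implicit Types (u v w X Y Z : vec).
Variables (a : R) (G : 'M[R]_3).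

Lemma ip_addl u v w : ip G (u + v) w = ip G u w + ip G v w.
Proof. by rewrite !ipE !sum3 !vaddE; ring. Qed.
Lemma ip_addr u v w : ip G w (u + v) = ip G w u + ip G w v.
Proof. by rewrite !ipE !sum3 !vaddE; ring. Qed.
Lemma ip_scalel c u w : ip G (c *: u) w = c * ip G u w.
Proof. by rewrite !ipE !sum3 !vscaleE; ring. Qed.
Lemma ip_scaler c u w : ip G w (c *: u) = c * ip G w u.
Proof. by rewrite !ipE !sum3 !vscaleE; ring. Qed.
Lemma ip_subl u v w : ip G (u - v) w = ip G u w - ip G v w.
Proof. by rewrite !ipE !sum3 !vsubE; ring. Qed.
Lemma ip_subr u v w : ip G w (u - v) = ip G w u - ip G w v.
Proof. by rewrite !ipE !sum3 !vsubE; ring. Qed.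

Lemma ip_sym u v : G^T = G -> ip G u v = ip G v u.
Proof.
move=> hs; have s : forall i j, G j i = G i j.
  by move=> i j; rewrite -{1}hs mxE.
rewrite !ipE !sum3 (s i1 i0) (s i2 i0) (s i2 i1); ring.
Qed.

Lemma br_addl u v w : br a (u + v) w = br a u w + br a v w.
Proof. by apply: vec_eq; rewrite !vaddE !(brE0, brE1, brE2) ?vaddE; ring. Qed.
Lemma br_addr u v w : br a w (u + v) = br a w u + br a w v.
Proof. by apply: vec_eq; rewrite !vaddE !(brE0, brE1, brE2) ?vaddE; ring. Qed.
Lemma br_scalel c u w : br a (c *: u) w = c *: br a u w.
Proof. by apply: vec_eq; rewrite !vscaleE !(brE0, brE1, brE2) ?vscaleE; ring. Qed.
Lemma br_scaler c u w : br a w (c *: u) = c *: br a w u.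
Proof. by apply: vec_eq; rewrite !vscaleE !(brE0, brE1, brE2) ?vscaleE; ring. Qed.

Lemma phiK_addX X1 X2 Y Z : phiK a G (X1 + X2) Y Z = phiK a G X1 Y Z + phiK a G X2 Y Z.
Proof. by rewrite /phiK ?br_addr ?br_addl ?br_scaler ?br_scalel ?ip_addl ?ip_addr ?ip_scalel ?ip_scaler; ring. Qed.
Lemma phiK_addY X Y1 Y2 Z : phiK a G X (Y1 + Y2) Z = phiK a G X Y1 Z + phiK a G X Y2 Z.
Proof. by rewrite /phiK ?br_addr ?br_addl ?br_scaler ?br_scalel ?ip_addl ?ip_addr ?ip_scalel ?ip_scaler; ring. Qed.
Lemma phiK_scaleX c X Y Z : phiK a G (c *: X) Y Z = c * phiK a G X Y Z.
Proof. by rewrite /phiK ?br_addr ?br_addl ?br_scaler ?br_scalel ?ip_addl ?ip_addr ?ip_scalel ?ip_scaler; ring. Qed.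
Lemma phiK_scaleY c X Y Z : phiK a G X (c *: Y) Z = c * phiK a G X Y Z.
Proof. by rewrite /phiK ?br_addr ?br_addl ?br_scaler ?br_scalel ?ip_addl ?ip_addr ?ip_scalel ?ip_scaler; ring. Qed.

Lemma nablaK X Y : nabla a G X Y =
  2^-1 *: (\row_(k < 3) phiK a G X Y (bv k) *m invmx G).
Proof. by []. Qed.

Lemma nabla_addX X1 X2 Y : nabla a G (X1 + X2) Y = nabla a G X1 Y + nabla a G X2 Y.
Proof.
rewrite !nablaK -scalerDr -mulmxDl; congr (_ *: (_ *m _)).
by apply/rowP => k; rewrite !mxE phiK_addX.
Qed.
Lemma nabla_addY X Y1 Y2 : nabla a G X (Y1 + Y2) = nabla a G X Y1 + nabla a G X Y2.
Proof.
rewrite !nablaK -scalerDr -mulmxDl; congr (_ *: (_ *m _)).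
by apply/rowP => k; rewrite !mxE phiK_addY.
Qed.
Lemma nabla_scaleX c X Y : nabla a G (c *: X) Y = c *: nabla a G X Y.
Proof.
rewrite !nablaK scalerA mulrC -scalerA scalemxAl; congr (_ *: (_ *m _)).
by apply/rowP => k; rewrite !mxE phiK_scaleX.
Qed.
Lemma nabla_scaleY c X Y : nabla a G X (c *: Y) = c *: nabla a G X Y.
Proof.
rewrite !nablaK scalerA mulrC -scalerA scalemxAl; congr (_ *: (_ *m _)).
by apply/rowP => k; rewrite !mxE phiK_scaleY.
Qed.

Lemma zmod3 (V : zmodType) (a1 a2 b1 b2 c1 c2 : V) :
  a1 + a2 - (b1 + b2) - (c1 + c2) = (a1 - b1 - c1) + (a2 - b2 - c2).
Proof. by rewrite !opprD (addrACA a1 a2) (addrACA (a1 - b1)). Qed.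

Lemma curv_addZ X Y Z1 Z2 : curv a G X Y (Z1 + Z2) = curv a G X Y Z1 + curv a G X Y Z2.
Proof. by rewrite /curv !nabla_addY zmod3. Qed.
Lemma curv_addY X Y1 Y2 Z : curv a G X (Y1 + Y2) Z = curv a G X Y1 Z + curv a G X Y2 Z.
Proof. by rewrite /curv br_addr !nabla_addX !nabla_addY zmod3. Qed.
Lemma curv_scaleZ c X Y Z : curv a G X Y (c *: Z) = c *: curv a G X Y Z.
Proof. by rewrite /curv !nabla_scaleY !scalerBr. Qed.
Lemma curv_scaleY c X Y Z : curv a G X (c *: Y) Z = c *: curv a G X Y Z.
Proof. by rewrite /curv br_scaler !nabla_scaleX !nabla_scaleY !scalerBr. Qed.

End Lin.

Section Indep.
Variable R : realFieldType.
Local Notation vec := 'rV[R]_3.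
Local Notation bv := (@bvec R).
Implicit Types (u v w X Y Z : vec).

Definition rowsM (F : 'I_3 -> vec) : 'M[R]_3 := \matrix_(i, j) F i ord0 j.

Lemma bv_rowsM F i : bv i *m rowsM F = F i.
Proof. by rewrite /bvec -rowE; apply/rowP => j; rewrite !mxE. Qed.

Lemma mul_bvT (w : vec) j : (w *m (bv j)^T) ord0 ord0 = w ord0 j.
Proof. by rewrite /bvec trmx_delta -colE mxE. Qed.

Lemma entry_bv (M : 'M[R]_3) i j : M i j = (bv i *m M *m (bv j)^T) ord0 ord0.
Proof. by rewrite mul_bvT /bvec -rowE mxE. Qed.

Lemma onb_frame G F : orthonormal_basis G F -> rowsM F *m G *m (rowsM F)^T = 1%:M.
Proof.
move=> hF; apply/matrixP => i j.
rewrite entry_bv !mulmxA bv_rowsM -mulmxA -trmx_mul bv_rowsM.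
by rewrite -/(ip G (F i) (F j)) hF mxE.
Qed.

Lemma onb_expand G F : orthonormal_basis G F ->
  forall v, v = \sum_(j < 3) ip G v (F j) *: F j.
Proof.
move=> hF v; have h := onb_frame hF; have [uP uG iG] := frame_inv h.
have e : v = v *m G *m (rowsM F)^T *m rowsM F.
  by rewrite -!mulmxA -iG mulmxV // mulmx1.
rewrite {1}e mulmx_sum_row; apply: eq_bigr => j _.
congr (_ *: _); last by rewrite rowE bv_rowsM.
by rewrite /ip -(bv_rowsM F j) trmx_mul !mulmxA mul_bvT.
Qed.

Lemma trace_indep G (T : vec -> vec -> vec)
  (hAl : forall x y z, T (x + y) z = T x z + T y z)
  (hSl : forall c x z, T (c *: x) z = c *: T x z)
  (hAr : forall x y z, T z (x + y) = T z x + T z y)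
  (hSr : forall c x z, T z (c *: x) = c *: T z x)
  E F : G^T = G -> orthonormal_basis G E -> orthonormal_basis G F ->
  \sum_(i < 3) T (F i) (F i) = \sum_(i < 3) T (E i) (E i).
Proof.
move=> hs hE hF.
have T0l z : T 0 z = 0 by have := hSl 0 0 z; rewrite !scale0r.
have T0r z : T z 0 = 0 by have := hSr 0 0 z; rewrite !scale0r.
have sl z (g : 'I_3 -> vec) : T (\sum_(j < 3) g j) z = \sum_(j < 3) T (g j) z.
  exact: (big_morph (fun x => T x z) (fun x y => hAl x y z) (T0l z)).
have sr z (g : 'I_3 -> vec) : T z (\sum_(j < 3) g j) = \sum_(j < 3) T z (g j).
  exact: (big_morph (fun x => T z x) (fun x y => hAr x y z) (T0r z)).
have ipl w (g : 'I_3 -> vec) : ip G (\sum_(j < 3) g j) w = \sum_(j < 3) ip G (g j) w.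
  apply: (big_morph (fun x => ip G x w) (fun x y => ip_addl G x y w)).
  by have := ip_scalel G 0 0 w; rewrite scale0r mul0r.
have step1 : \sum_(i < 3) T (F i) (F i) = \sum_(i < 3) \sum_(j < 3) \sum_(k < 3)
    (ip G (F i) (E j) * ip G (F i) (E k)) *: T (E j) (E k).
  apply: eq_bigr => i _.
  rewrite {1 2}(onb_expand hE (F i)) sl; apply: eq_bigr => j _.
  rewrite hSl sr scaler_sumr; apply: eq_bigr => k _.
  by rewrite hSr scalerA.
rewrite step1 exchange_big /=; apply: eq_bigr => j _.
rewrite exchange_big /=.
have h2 : forall k, \sum_(i < 3) (ip G (F i) (E j) * ip G (F i) (E k)) = ip G (E j) (E k).
  move=> k; rewrite [in RHS](onb_expand hF (E j)) ipl; apply: eq_bigr => i _.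
  by rewrite ip_scalel (ip_sym _ _ hs).
under eq_bigr => k _ do rewrite -scaler_suml h2 hE.
rewrite (bigD1 j) //= eqxx scale1r big1 ?addr0 // => k /negbTE.
by rewrite eq_sym => ->; rewrite scale0r.
Qed.

Lemma ricci_indep a G E F X : G^T = G ->
  orthonormal_basis G E -> orthonormal_basis G F ->
  ricci a G F X = ricci a G E X.
Proof.
move=> hs hE hF; rewrite /ricci.
apply: (@trace_indep G (curv a G X) _ _ _ _ E F hs hE hF).
- by move=> x y z; rewrite curv_addY.
- by move=> c x z; rewrite curv_scaleY.
- by move=> x y z; rewrite curv_addZ.
- by move=> c x z; rewrite curv_scaleZ.
Qed.

End Indep.

Section Sol.
Variable R : realFieldType.
Local Notation vec := 'rV[R]_3.
Local Notation bv := (@bvec R).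
Implicit Types (u v w : vec).

Lemma mul_diag3 u x y z : u *m diag_mx (r3 x y z) =
  r3 (u ord0 i0 * x) (u ord0 i1 * y) (u ord0 i2 * z).
Proof. by rewrite mul_mx_diag; apply: vec_eq; rewrite !mxE !(r3E0, r3E1, r3E2). Qed.

Lemma bc_m0 (l m a : R) : l != 0 -> a != 1 ->
  (exists c D, derivI (bc l m a) D /\ forall u, ricciI (bc l m a) u = c *: u + u *m D) ->
  m = 0.
Proof.
move=> hl ha [c [D [hD hR]]].
have h1 := congr1 (fun w : vec => w ord0 i2) (hD (bv i0) (bv i1)).
have h2 := congr1 (fun w : vec => w ord0 i2) (hR (bv i1)).
move: h1 h2; rewrite /= !vaddE !mulE !vscaleE ricci_bc !bcE0 !bcE1 !bcE2 !mulE bv0 bv1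
  !(r3E0, r3E1, r3E2) => h1 h2.
have eD : D i1 i2 = -(l * m).
  transitivity (c * 0 + (0 * D i0 i2 + 1 * D i1 i2 + 0 * D i2 i2)); first by ring.
  by rewrite -h2; ring.
move: h1; set L := (X in X = _); set Rr := (X in _ = X) => h1.
have e : l * l * (a - 1) * m = 0.
  have e0 : L - Rr = 0 by rewrite h1 subrr.
  rewrite -e0 /L /Rr eD; ring.
move/eqP: e; rewrite !mulf_eq0 (negbTE hl) subr_eq0 (negbTE ha) /=.
by move/eqP.
Qed.

Lemma bc_sol0 (l a : R) :
  exists c D, derivI (bc l 0 a) D /\ forall u, ricciI (bc l 0 a) u = c *: u + u *m D.
Proof.
exists (- (l ^+ 2 * (1 + a ^+ 2))), (diag_mx (r3 0 (l ^+ 2 * (a ^+ 2 - a)) (l ^+ 2 * (1 - a)))).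
split.
- move=> u v; rewrite !mul_diag3; apply: vec_eq;
  rewrite ?vaddE !(bcE0, bcE1, bcE2) !(r3E0, r3E1, r3E2) ?(bcE0, bcE1, bcE2); ring.
- move=> u; rewrite ricci_bc mul_diag3; apply: vec_eq;
  rewrite !vaddE !vscaleE !(r3E0, r3E1, r3E2); ring.
Qed.

End Sol.

Section Helpers.
Variable R : realFieldType.
Local Notation vec := 'rV[R]_3.
Local Notation bv := (@bvec R).
Implicit Types (u v w p q r : vec).

Definition P3 p q r : 'M[R]_3 :=
  \matrix_(i < 3, j < 3) (if val i == 0%N then p ord0 j else if val i == 1%N then q ord0 j else r ord0 j).

Lemma P3E0 p q r j : P3 p q r i0 j = p ord0 j. Proof. by rewrite mxE. Qed.
Lemma P3E1 p q r j : P3 p q r i1 j = q ord0 j. Proof. by rewrite mxE. Qed.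
Lemma P3E2 p q r j : P3 p q r i2 j = r ord0 j. Proof. by rewrite mxE. Qed.

Lemma bv_P3 p q r i : bv i *m P3 p q r =
  if val i == 0%N then p else if val i == 1%N then q else r.
Proof.
rewrite /bvec -rowE; apply/rowP => j; rewrite !mxE.
by case: ifP => _ //; case: ifP.
Qed.

Lemma rowsM_bv (P : 'M[R]_3) : rowsM (fun i => bv i *m P) = P.
Proof. by apply/matrixP => i j; rewrite mxE /bvec -rowE mxE. Qed.

Lemma frame_bc (a l mu nu be de t : R) :
  forall u v, br a (u *m P3 (r3 l mu nu) (r3 0 be 0) (r3 0 (t * be) de))
                   (v *m P3 (r3 l mu nu) (r3 0 be 0) (r3 0 (t * be) de))
   = bc l (l * (1 - a) * t) a u v *m P3 (r3 l mu nu) (r3 0 be 0) (r3 0 (t * be) de).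
Proof.
move=> u v; apply: vec_eq;
rewrite !(brE0, brE1, brE2) !mulE !(P3E0, P3E1, P3E2) !(bcE0, bcE1, bcE2)
  !(r3E0, r3E1, r3E2); ring.
Qed.

Lemma bc_l0 (a l : R) u v : bc l 0 a u v = l *: br a u v.
Proof.
apply: vec_eq; rewrite vscaleE !(bcE0, bcE1, bcE2) !(brE0, brE1, brE2); ring.
Qed.

Lemma ip1_dot u v : ip 1%:M u v = dot u v.
Proof. by rewrite /ip mulmx1 mxE sum3 /dot !mxE. Qed.

Lemma ip1_bv i j : ip 1%:M (bv i) (bv j) = (i == j)%:R.
Proof. by rewrite /ip -entry_bv mxE. Qed.

Lemma vec_neq0 u i : u ord0 i = 1 -> u != 0.
Proof. move=> h; apply/eqP => e; move: h; rewrite e mxE => /eqP; by rewrite eq_sym oner_eq0. Qed.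

Lemma onb3 G p q r : G^T = G ->
  ip G p p = 1 -> ip G q q = 1 -> ip G r r = 1 ->
  ip G p q = 0 -> ip G p r = 0 -> ip G q r = 0 ->
  orthonormal_basis G (fun i => bv i *m P3 p q r).
Proof.
move=> hs h1 h2 h3 h4 h5 h6 i j; rewrite !bv_P3.
have s := ip_sym (G := G) _ _ hs.
case: i => [[|[|[|i]]] Hi] //; case: j => [[|[|[|j]]] Hj] //=;
  rewrite ?h1 ?h2 ?h3 ?h4 ?h5 ?h6 ?(s q p) ?(s r p) ?(s r q) ?h4 ?h5 ?h6 //.
Qed.

End Helpers.

Lemma normalize (R : rcfType) (G : 'M[R]_3) (v : 'rV[R]_3) : 0 < ip G v v ->
  0 < (Num.sqrt (ip G v v))^-1 /\
  ip G ((Num.sqrt (ip G v v))^-1 *: v) ((Num.sqrt (ip G v v))^-1 *: v) = 1.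
Proof.
move=> hq; split; first by rewrite invr_gt0 sqrtr_gt0.
rewrite ip_scalel ip_scaler.
have e : ip G v v = Num.sqrt (ip G v v) ^+ 2 by rewrite sqr_sqrtr // ltW.
have hs : Num.sqrt (ip G v v) != 0 by rewrite lt0r_neq0 // sqrtr_gt0.
move: hs e; set q := ip G v v; set t := Num.sqrt q; clearbody t => hs e.
by rewrite e; field.
Qed.

Unset Implicit Arguments.
Set Strict Implicit.
Theorem proposition4p9 (R : realType) (a : R) (ha1 : -1 <= a) (ha2 : a < 1)
  (G : 'M[R]_3) (hG : is_inner_product G) :
  solvsoliton a G <-> iso_up_to_scaling a G 1%:M.
Proof.
have [hs hpos] := hG.
have ha1' : a != 1 by rewrite lt_eqF.
split.
- move=> [F [hF [c [D [hD hric]]]]].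
  have q2p : 0 < ip G (bvec R i1) (bvec R i1).
    by apply: hpos; apply: (@vec_neq0 _ _ i1); rewrite bv1 r3E1.
  pose s2 := (Num.sqrt (ip G (bvec R i1) (bvec R i1)))^-1.
  pose f2 := s2 *: bvec R i1.
  have [s2p n2] : 0 < s2 /\ ip G f2 f2 = 1 := normalize q2p.
  have f2E : f2 = r3 0 s2 0.
    by rewrite /f2 bv1; apply: vec_eq; rewrite !vscaleE !(r3E0, r3E1, r3E2); ring.
  clearbody f2 s2.
  pose k := ip G (bvec R i2) f2.
  pose w3 := bvec R i2 - k *: f2.
  have w3_2 : w3 ord0 i2 = 1.
    by rewrite /w3 vsubE vscaleE f2E bv2 !r3E2; ring.
  have q3p : 0 < ip G w3 w3 by apply: hpos; exact: vec_neq0 w3_2.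
  pose s3 := (Num.sqrt (ip G w3 w3))^-1.
  pose f3 := s3 *: w3.
  have [s3p n3] : 0 < s3 /\ ip G f3 f3 = 1 := normalize q3p.
  have f3E : f3 = r3 0 (- (s3 * k) * s2) s3.
    rewrite /f3 /w3 f2E bv2; apply: vec_eq;
    rewrite !vscaleE !vsubE !vscaleE !(r3E0, r3E1, r3E2); ring.
  have o32 : ip G f3 f2 = 0.
    by rewrite /f3 /w3 ip_scalel ip_subl ip_scalel n2 -/k; ring.
  have o23 : ip G f2 f3 = 0 by rewrite ip_sym.
  clearbody f3 s3 w3.
  pose k1 := ip G (bvec R i0) f2.
  pose k2 := ip G (bvec R i0) f3.
  pose w1 := bvec R i0 - k1 *: f2 - k2 *: f3.
  have w1_0 : w1 ord0 i0 = 1.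
    by rewrite /w1 f2E f3E bv0 !vsubE !vscaleE !r3E0; ring.
  have q1p : 0 < ip G w1 w1 by apply: hpos; exact: vec_neq0 w1_0.
  pose s1 := (Num.sqrt (ip G w1 w1))^-1.
  pose f1 := s1 *: w1.
  have [s1p n1] : 0 < s1 /\ ip G f1 f1 = 1 := normalize q1p.
  have o12 : ip G f1 f2 = 0.
    by rewrite /f1 /w1 ip_scalel !ip_subl !ip_scalel n2 o32 -/k1; ring.
  have o13 : ip G f1 f3 = 0.
    by rewrite /f1 /w1 ip_scalel !ip_subl !ip_scalel n3 o23 -/k2; ring.
  have f1E : f1 = r3 s1 (f1 ord0 i1) (f1 ord0 i2).
    apply: vec_eq; rewrite ?r3E0 ?r3E1 ?r3E2 //.
    by rewrite /f1 vscaleE w1_0 mulr1.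
  clearbody f1 s1 w1.
  pose P := P3 f1 f2 f3.
  pose F' := fun i => bvec R i *m P.
  have hF' : orthonormal_basis G F' := onb3 hs n1 n2 n3 o12 o13 o23.
  have hP : P *m G *m P^T = 1%:M by have := onb_frame hF'; rewrite rowsM_bv.
  have hb : forall u v, br a (u *m P) (v *m P) =
      bc s1 (s1 * (1 - a) * (- (s3 * k))) a u v *m P.
    by rewrite /P f1E f2E f3E; exact: frame_bc.
  have hsol : exists c D, is_derivation a D /\
      forall X, ricci a G F' X = c *: X + X *m D.
    exists c, D; split => // X.
    by rewrite (ricci_indep a X hs hF hF').
  have hm0 := bc_m0 (lt0r_neq0 s1p) ha1' ((soliton_transfer hP hb (fun i => erefl)).1 hsol).
  rewrite hm0 in hb.
  have hs1 : s1 != 0 := lt0r_neq0 s1p.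
  have uP : P \in unitmx by have [] := frame_inv hP.
  exists (s1 ^- 2), (s1 *: invmx P); split; first by rewrite invr_gt0 exprn_gt0.
  split; first split.
  + by rewrite unitmxZ ?unitmx_inv // unitfE.
  + move=> u v.
    have eu : u = (u *m invmx P) *m P by rewrite mulmxKV.
    have ev : v = (v *m invmx P) *m P by rewrite mulmxKV.
    rewrite -!scalemxAr br_scalel br_scaler [in RHS]eu [in RHS]ev hb bc_l0.
    by rewrite -!scalemxAl (mulmxK uP).
  + move=> u v.
    have eu : u = (u *m invmx P) *m P by rewrite mulmxKV.
    have ev : v = (v *m invmx P) *m P by rewrite mulmxKV.
    rewrite [in LHS]eu [in LHS]ev (ip_frame _ _ hP) -!scalemxAr ip_scalel ip_scaler ip1_dot.
    by field.
- move=> [k [f [kp [[uf hf] hip]]]].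
  pose s := (Num.sqrt k)^-1.
  pose P := s *: invmx f.
  pose F := fun i => bvec R i *m P.
  have ks : k * (s * s) = 1.
    have e : k = Num.sqrt k ^+ 2 by rewrite sqr_sqrtr // ltW.
    have hs0 : Num.sqrt k != 0 by rewrite lt0r_neq0 // sqrtr_gt0.
    rewrite /s; move: hs0 e; set t := Num.sqrt k; clearbody t => hs0 e.
    by rewrite e; field.
  have key : forall u v, ip G (u *m P) (v *m P) = dot u v.
    move=> u v; rewrite hip /P -!scalemxAr -!scalemxAl !(mulmxKV uf).
    rewrite ip_scalel ip_scaler ip1_dot.
    by transitivity (k * (s * s) * dot u v); [ring | rewrite ks mul1r].
  have hF : orthonormal_basis G F.
    by move=> i j; rewrite /F key -ip1_dot ip1_bv.
  have hP : P *m G *m P^T = 1%:M by have := onb_frame hF; rewrite rowsM_bv.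
  have hb : forall u v, br a (u *m P) (v *m P) = bc s 0 a u v *m P.
    move=> u v; rewrite /P -!scalemxAr br_scalel br_scaler bc_l0.
    rewrite -scalemxAl; congr (_ *: (_ *: _)).
    by rewrite -[LHS](mulmxK uf) -hf !(mulmxKV uf).
  have [c [D [hD hr]]] := (soliton_transfer hP hb (fun i => erefl)).2 (bc_sol0 s a).
  exists F; split => //; exists c, D; split => //.
Qed.
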